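(* Let $\vec r:\mathbb{Z}\to\mathbb{R}^2$ be a nondegenerate discrete planar curve with constant first and second centroaffine curvatures which is closed with period $p$. Then $\vec r$ is centrosymmetric if and only if $p$ is even.
   Context: A discrete planar curve is a map $\vec r:\mathbb{Z}\to\mathbb{R}^2$; write $\vec r_k=\vec r(k)$ and $\vec t_k=\vec r_{k+1}-\vec r_k$. $[\vec a,\vec b]$ denotes the $2\times2$ determinant. The curve is nondegenerate if $[\vec t_{k-1},\vec t_k]\ne0$ for all $k$. Its first and second centroaffine curvatures are $\kappa_k=\frac{[\vec t_k,\vec t_{k+1}]}{[\vec t_{k-1},\vec t_k]}$, $\bar\kappa_k=\frac{[\vec t_{k-1},\vec t_{k+1}]}{[\vec t_{k-1},\vec t_k]}$. Closed with period $p$: $\vec r(k+p)=\vec r(k)$ for all $k$, $p$ minimal. The closed curve is centrosymmetric if there is a point $\vec c\in\mathbb{R}^2$ such that the vertex set $\{\vec r_k:k\in\mathbb{Z}\}$ is invariant under the point reflection $\vec x\mapsto 2\vec c-\vec x$. *)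

(* Defs.v *)
From Stdlib Require Import Reals Lra Lia ZArith.
Open Scope R_scope.

Definition vec := (R * R)%type.

Definition vsub (a b : vec) : vec := (fst a - fst b, snd a - snd b).

Definition det2 (a b : vec) : R := fst a * snd b - snd a * fst b.

Definition tangent (r : Z -> vec) (k : Z) : vec := vsub (r (k + 1)%Z) (r k).

Definition nondegenerate (r : Z -> vec) : Prop :=
  forall k : Z, det2 (tangent r (k - 1)%Z) (tangent r k) <> 0.

Definition kappa (r : Z -> vec) (k : Z) : R :=
  det2 (tangent r k) (tangent r (k + 1)%Z) / det2 (tangent r (k - 1)%Z) (tangent r k).

Definition kappabar (r : Z -> vec) (k : Z) : R :=
  det2 (tangent r (k - 1)%Z) (tangent r (k + 1)%Z) / det2 (tangent r (k - 1)%Z) (tangent r k).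

Definition closed_with_period (r : Z -> vec) (p : Z) : Prop :=
  (0 < p)%Z /\
  (forall k : Z, r (k + p)%Z = r k) /\
  (forall q : Z, (0 < q < p)%Z -> exists k : Z, r (k + q)%Z <> r k).

Definition centrosymmetric (r : Z -> vec) : Prop :=
  exists c : vec, forall x : vec,
    (exists k : Z, r k = x) <->
    (exists k : Z, r k = (2 * fst c - fst x, 2 * snd c - snd x)).

(* Main.v *)
Require Import Defs.
From Stdlib Require Import Reals ZArith Lra Lia Psatz.
Open Scope R_scope.

Definition lc (al : R) (x : vec) (be : R) (y : vec) : vec :=
  (al * fst x + be * fst y, al * snd x + be * snd y).
Definition scal (c : R) (x : vec) : vec := (c * fst x, c * snd x).

Definition Rec (a b : R) (x : Z -> vec) : Prop :=
  forall k, x (k+2)%Z = lc b (x (k+1)%Z) (-a) (x k).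

Lemma vec_ext (x y : vec) : fst x = fst y -> snd x = snd y -> x = y.
Proof. destruct x, y; simpl; intros; subst; reflexivity. Qed.

Lemma cancel_l (a x y : R) : a <> 0 -> a * x = a * y -> x = y.
Proof. intros. apply (Rmult_eq_reg_l a); auto. Qed.

Lemma rec_unique a b x y : a <> 0 -> Rec a b x -> Rec a b y ->
  x 0%Z = y 0%Z -> x 1%Z = y 1%Z -> forall k, x k = y k.
Proof.
  intros Ha Hx Hy H0 H1.
  assert (forall k, x k = y k /\ x (k+1)%Z = y (k+1)%Z) as HH.
  { intro k. induction k using Z.peano_ind.
    - split; assumption.
    - destruct IHk as [E1 E2]. split.
      + unfold Z.succ; exact E2.
      + unfold Z.succ. replace (k+1+1)%Z with (k+2)%Z by ring.
        rewrite Hx, Hy, E1, E2. reflexivity.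
    - destruct IHk as [E1 E2]. split.
      + pose proof (Hx (Z.pred k)) as A. pose proof (Hy (Z.pred k)) as B.
        replace (Z.pred k + 2)%Z with (k+1)%Z in A, B by lia.
        replace (Z.pred k + 1)%Z with k in A, B by lia.
        rewrite E1, E2 in A. rewrite A in B.
        apply vec_ext.
        * apply (f_equal fst) in B. simpl in B. apply (cancel_l (-a)). lra. lra.
        * apply (f_equal snd) in B. simpl in B. apply (cancel_l (-a)). lra. lra.
      + replace (Z.pred k + 1)%Z with k by lia. exact E1. }
  intro k; apply HH.
Qed.

Lemma Z_const (f : Z -> vec) : (forall k, f (k+1)%Z = f k) -> forall k, f k = f 0%Z.
Proof.
  intros H k. induction k using Z.peano_ind.
  - reflexivity.
  - unfold Z.succ. rewrite H. exact IHk.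
  - rewrite <- IHk. rewrite <- (H (Z.pred k)). f_equal. lia.
Qed.

Lemma Z_constR (f : Z -> R) : (forall k, f (k+1)%Z = f k) -> forall k, f k = f 0%Z.
Proof.
  intros H k. induction k using Z.peano_ind.
  - reflexivity.
  - unfold Z.succ. rewrite H. exact IHk.
  - rewrite <- IHk. rewrite <- (H (Z.pred k)). f_equal. lia.
Qed.

Lemma pow_pm1 (x : R) (n : nat) : (0 < n)%nat -> x ^ n = 1 -> x = 1 \/ x = -1.
Proof.
  intros Hn H.
  assert (Ha : Rabs x ^ n = 1) by (rewrite RPow_abs, H; apply Rabs_R1).
  destruct (Rtotal_order (Rabs x) 1) as [Hl|[He|Hg]].
  - pose proof (pow_lt_1_compat (Rabs x) n (conj (Rabs_pos x) Hl) Hn). lra.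
  - unfold Rabs in He. destruct (Rcase_abs x); lra.
  - pose proof (Rlt_pow_R1 _ n Hg Hn). lra.
Qed.

Lemma pow_odd1 (x : R) (m : nat) : x ^ (2*m+1) = 1 -> x = 1.
Proof.
  intros H. destruct (pow_pm1 x (2*m+1)) as [E|E]; auto. lia.
  subst x. rewrite Nat.add_1_r, pow_1_odd in H. lra.
Qed.

Lemma indep (x y : vec) (al be : R) : det2 x y <> 0 ->
  al * fst x + be * fst y = 0 -> al * snd x + be * snd y = 0 -> al = 0 /\ be = 0.
Proof.
  destruct x as [x1 x2], y as [y1 y2]; unfold det2; simpl; intros HD H1 H2.
  split.
  - apply (cancel_l (x1*y2 - x2*y1)); auto.
    assert (E: (x1*y2 - x2*y1) * al = y2 * (al*x1 + be*y1) - y1*(al*x2+be*y2)) by ring.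
    rewrite E, H1, H2. ring.
  - apply (cancel_l (x1*y2 - x2*y1)); auto.
    assert (E: (x1*y2 - x2*y1) * be = x1 * (al*x2 + be*y2) - x2*(al*x1+be*y1)) by ring.
    rewrite E, H1, H2. ring.
Qed.

Lemma decomp (u v w : vec) (a b : R) : det2 u v <> 0 ->
  det2 v w = a * det2 u v -> det2 u w = b * det2 u v -> w = lc b v (-a) u.
Proof.
  destruct u as [u1 u2], v as [v1 v2], w as [w1 w2]; unfold det2, lc; simpl.
  intros HD H1 H2. apply vec_ext; simpl.
  - apply (cancel_l (u1*v2 - u2*v1)); auto.
    assert (E: (u1*v2-u2*v1)*w1 - (u1*v2-u2*v1)*(b*v1 + -a*u1)
      = v1*(u1*w2 - u2*w1 - b*(u1*v2-u2*v1)) - u1*(v1*w2 - v2*w1 - a*(u1*v2-u2*v1))) by ring.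
    rewrite H1, H2 in E. lra.
  - apply (cancel_l (u1*v2 - u2*v1)); auto.
    assert (E: (u1*v2-u2*v1)*w2 - (u1*v2-u2*v1)*(b*v2 + -a*u2)
      = v2*(u1*w2 - u2*w1 - b*(u1*v2-u2*v1)) - u2*(v1*w2 - v2*w1 - a*(u1*v2-u2*v1))) by ring.
    rewrite H1, H2 in E. lra.
Qed.

Lemma arith_seq (G : Z -> vec) (v : vec) :
  (forall k, G (k+1)%Z = lc 1 (G k) 1 v) ->
  forall n : nat, G (Z.of_nat n) = lc 1 (G 0%Z) (INR n) v.
Proof.
  intros H n. induction n.
  - simpl. apply vec_ext; unfold lc; simpl; ring.
  - rewrite Nat2Z.inj_succ. unfold Z.succ. rewrite H, IHn, S_INR.
    apply vec_ext; unfold lc; simpl; ring.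
Qed.

Lemma geom_seq (x : Z -> vec) (l : R) :
  (forall n : nat, x (Z.of_nat n + 1)%Z = scal l (x (Z.of_nat n))) ->
  forall n : nat, x (Z.of_nat n) = scal (l ^ n) (x 0%Z).
Proof.
  intros H n. induction n.
  - simpl. apply vec_ext; unfold scal; simpl; ring.
  - rewrite Nat2Z.inj_succ. unfold Z.succ. rewrite H, IHn.
    apply vec_ext; unfold scal; simpl; ring.
Qed.

Lemma L_rec_t (r : Z -> vec) (a b : R) : nondegenerate r ->
  (forall k, kappa r k = a) -> (forall k, kappabar r k = b) -> Rec a b (tangent r).
Proof.
  intros Hnd Ha Hb k.
  pose proof (Hnd (k+1)%Z) as HD. pose proof (Ha (k+1)%Z) as HA. pose proof (Hb (k+1)%Z) as HB.
  unfold kappa, kappabar in *.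
  replace (k+1-1)%Z with k in * by ring. replace (k+1+1)%Z with (k+2)%Z in * by ring.
  apply decomp; auto.
  - rewrite <- HA. field. auto.
  - rewrite <- HB. field. auto.
Qed.

Lemma L_a_nz (r : Z -> vec) (a : R) : nondegenerate r ->
  (forall k, kappa r k = a) -> a <> 0.
Proof.
  intros Hnd Ha. pose proof (Ha 1%Z) as HA. unfold kappa in HA.
  pose proof (Hnd 1%Z) as H1. pose proof (Hnd 2%Z) as H2.
  replace (1-1)%Z with 0%Z in * by ring. replace (2-1)%Z with 1%Z in * by ring.
  replace (1+1)%Z with 2%Z in * by ring.
  rewrite <- HA. unfold Rdiv. apply Rmult_integral_contrapositive_currified; auto.
  apply Rinv_neq_0_compat; auto.
Qed.

Lemma L_nz (r : Z -> vec) (a b : R) (pz : Z) : nondegenerate r -> Rec a b (tangent r) ->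
  (0 < pz)%Z -> (forall k, r (k + pz)%Z = r k) -> 1 - b + a <> 0.
Proof.
  intros Hnd Hr Hp Hper Hz.
  assert (Eb : b = 1 + a) by lra. subst b.
  set (t := tangent r) in *.
  set (f := fun k => lc 1 (t (k+1)%Z) (-a) (t k)).
  assert (Hf : forall k, f (k+1)%Z = f k).
  { intro k. unfold f. replace (k+1+1)%Z with (k+2)%Z by ring. rewrite Hr.
    apply vec_ext; unfold lc; simpl; ring. }
  pose proof (Z_const f Hf) as Hc.
  set (G := fun k => lc 1 (r (k+1)%Z) (-a) (r k)).
  assert (HG : forall k, G (k+1)%Z = lc 1 (G k) 1 (f 0%Z)).
  { intro k. rewrite <- (Hc k). unfold G, f, t, tangent, vsub, lc. simpl.
    replace (k+1+1)%Z with (k+2)%Z by ring.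
    apply vec_ext; simpl; ring. }
  pose proof (arith_seq G _ HG (Z.to_nat pz)) as HA.
  rewrite Z2Nat.id in HA by lia.
  assert (HGp : G pz = G 0%Z).
  { unfold G. replace (pz+1)%Z with (1 + pz)%Z by ring. rewrite Hper.
    rewrite <- (Hper 0%Z). replace (0+pz)%Z with pz by ring. reflexivity. }
  rewrite HGp in HA.
  assert (Hn : 0 < INR (Z.to_nat pz)) by (apply lt_0_INR; lia).
  assert (E1 : fst (f 0%Z) = 0).
  { apply (f_equal fst) in HA. unfold lc in HA. cbn [fst snd] in HA.
    apply (cancel_l (INR (Z.to_nat pz))). apply Rgt_not_eq; lra. lra. }
  assert (E2 : snd (f 0%Z) = 0).
  { apply (f_equal snd) in HA. unfold lc in HA. cbn [fst snd] in HA.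
    apply (cancel_l (INR (Z.to_nat pz))). apply Rgt_not_eq; lra. lra. }
  apply (Hnd 1%Z). replace (1-1)%Z with 0%Z by ring.
  unfold f, lc in E1, E2. cbn [fst snd] in E1, E2. replace (0+1)%Z with 1%Z in * by ring.
  change (tangent r) with t. unfold det2.
  replace (fst (t 1%Z)) with (a * fst (t 0%Z)) by lra.
  replace (snd (t 1%Z)) with (a * snd (t 0%Z)) by lra. ring.
Qed.

Lemma L_u (r : Z -> vec) (a b : R) : Rec a b (tangent r) -> 1 - b + a <> 0 ->
  exists O : vec, Rec a b (fun k => vsub (r k) O).
Proof.
  intros Hr Hz.
  set (W := fun k => (fst (r (k+2)%Z) - b * fst (r (k+1)%Z) + a * fst (r k),
                      snd (r (k+2)%Z) - b * snd (r (k+1)%Z) + a * snd (r k))).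
  assert (HW : forall k, W (k+1)%Z = W k).
  { intro k. pose proof (Hr k) as H. unfold tangent, vsub, lc in H.
    replace (k+1+1)%Z with (k+2)%Z in H by ring. replace (k+2+1)%Z with (k+3)%Z in H by ring.
    unfold W. replace (k+1+2)%Z with (k+3)%Z by ring. replace (k+1+1)%Z with (k+2)%Z by ring.
    apply (f_equal fst) in H as H1. apply (f_equal snd) in H as H2. cbn [fst snd] in H1, H2.
    apply vec_ext; cbn [fst snd]; lra. }
  pose proof (Z_const W HW) as HC.
  exists (scal (1/(1-b+a)) (W 0%Z)).
  intro k.
  assert (H1 : fst (r (k+2)%Z) - b * fst (r (k+1)%Z) + a * fst (r k) = fst (W 0%Z))
    by exact (f_equal fst (HC k)).
  assert (H2 : snd (r (k+2)%Z) - b * snd (r (k+1)%Z) + a * snd (r k) = snd (W 0%Z))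
    by exact (f_equal snd (HC k)).
  assert (F1 : (1-b+a) * (1/(1-b+a) * fst (W 0%Z)) = fst (W 0%Z)) by (field; auto).
  assert (F2 : (1-b+a) * (1/(1-b+a) * snd (W 0%Z)) = snd (W 0%Z)) by (field; auto).
  unfold vsub, lc, scal. apply vec_ext; cbn [fst snd].
  - set (o := 1 / (1 - b + a) * fst (W 0%Z)) in *. clearbody o. clear F2 H2.
    set (w := fst (W 0%Z)) in *. clearbody w. lra.
  - set (o := 1 / (1 - b + a) * snd (W 0%Z)) in *. clearbody o. clear F1 H1.
    set (w := snd (W 0%Z)) in *. clearbody w. lra.
Qed.

Lemma L_E0 (u0 u1 u2 O : vec) (a b : R) :
  u2 = lc b u1 (-a) u0 ->
  det2 (vsub (vsub (u1) O) (vsub u0 O)) (vsub (vsub u2 O) (vsub u1 O)) = (1-b+a) * det2 u0 u1.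
Proof.
  intros ->. destruct u0, u1, O. unfold det2, vsub, lc; simpl. ring.
Qed.

Definition Amap (u0 u1 u2 : vec) (E : R) (x : vec) : vec :=
  scal (1/E) (lc (det2 x u1) u1 (det2 u0 x) u2).

Lemma A_lin u0 u1 u2 E al x be y : E <> 0 ->
  Amap u0 u1 u2 E (lc al x be y) = lc al (Amap u0 u1 u2 E x) be (Amap u0 u1 u2 E y).
Proof.
  intros HE. destruct u0, u1, u2, x, y. unfold Amap, scal, lc, det2; simpl.
  apply vec_ext; simpl; field; auto.
Qed.

Lemma Rec_lc a b x y al be : Rec a b x -> Rec a b y ->
  Rec a b (fun k => lc al (x k) be (y k)).
Proof.
  intros Hx Hy k. rewrite Hx, Hy. unfold lc. apply vec_ext; simpl; ring.
Qed.

Lemma Rec_shift a b x m : Rec a b x -> Rec a b (fun k => x (k + m)%Z).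
Proof.
  intros Hx k. simpl. replace (k+2+m)%Z with ((k+m)+2)%Z by ring.
  replace (k+1+m)%Z with ((k+m)+1)%Z by ring. apply Hx.
Qed.

Lemma Rec_A a b x u0 u1 u2 E : E <> 0 -> Rec a b x ->
  Rec a b (fun k => Amap u0 u1 u2 E (x k)).
Proof.
  intros HE Hx k. simpl. rewrite Hx. apply A_lin; auto.
Qed.

Lemma A_shift a b u : a <> 0 -> Rec a b u -> det2 (u 0%Z) (u 1%Z) <> 0 ->
  forall k, Amap (u 0%Z) (u 1%Z) (u 2%Z) (det2 (u 0%Z) (u 1%Z)) (u k) = u (k+1)%Z.
Proof.
  intros Ha Hu HE.
  apply (rec_unique a b (fun k => Amap (u 0%Z) (u 1%Z) (u 2%Z) (det2 (u 0%Z) (u 1%Z)) (u k))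
          (fun k => u (k+1)%Z)); auto.
  - apply Rec_A; auto.
  - apply Rec_shift; auto.
  - simpl. revert HE. destruct (u 0%Z), (u 1%Z), (u 2%Z).
    unfold Amap, scal, lc, det2; simpl; intros. apply vec_ext; simpl; field; auto.
  - simpl. replace (1+1)%Z with 2%Z by ring. revert HE. destruct (u 0%Z), (u 1%Z), (u 2%Z).
    unfold Amap, scal, lc, det2; simpl; intros. apply vec_ext; simpl; field; auto.
Qed.

Lemma cramer (u0 u1 x : vec) : det2 u0 u1 <> 0 ->
  x = lc (det2 x u1 / det2 u0 u1) u0 (det2 u0 x / det2 u0 u1) u1.
Proof.
  destruct u0, u1, x. unfold lc, det2; simpl. intros. apply vec_ext; simpl; field; auto.
Qed.

Lemma coef a b u m : a <> 0 -> Rec a b u -> det2 (u 0%Z) (u 1%Z) <> 0 ->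
  exists P Q, forall k, u (k + m)%Z = lc P (u k) Q (u (k+1)%Z).
Proof.
  intros Ha Hu HE.
  set (E := det2 (u 0%Z) (u 1%Z)) in *.
  set (A := Amap (u 0%Z) (u 1%Z) (u 2%Z) E).
  pose proof (A_shift a b u Ha Hu HE) as HA. fold E A in HA.
  exists (det2 (u m) (u 1%Z) / E), (det2 (u 0%Z) (u m) / E).
  apply (rec_unique a b (fun k => u (k+m)%Z)
     (fun k => lc (det2 (u m) (u 1%Z) / E) (u k) (det2 (u 0%Z) (u m) / E) (u (k+1)%Z))); auto.
  - apply Rec_shift; auto.
  - apply Rec_lc; auto. apply Rec_shift; auto.
  - cbv beta. replace (0+m)%Z with m by ring. replace (0+1)%Z with 1%Z by ring. apply cramer; auto.
  - cbv beta. replace (1+m)%Z with (m+1)%Z by ring. rewrite <- HA.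
    rewrite (cramer (u 0%Z) (u 1%Z) (u m)) at 1 by auto. fold E.
    unfold A. rewrite A_lin by auto. fold A. rewrite HA, HA. reflexivity.
Qed.

Lemma eig_pow a b u p l mu : Rec a b u -> det2 (u 0%Z) (u 1%Z) <> 0 ->
  (0 < p)%Z -> (forall k, u (k+p)%Z = u k) ->
  l + mu = b -> l * mu = a -> l ^ Z.to_nat p = 1.
Proof.
  intros Hu HE Hp Hper Hb Ha. subst a b.
  set (v := fun k => lc 1 (u (k+1)%Z) (-mu) (u k)).
  assert (Hv : forall n : nat, v (Z.of_nat n + 1)%Z = scal l (v (Z.of_nat n))).
  { intro n. unfold v. replace (Z.of_nat n + 1 + 1)%Z with (Z.of_nat n + 2)%Z by ring.
    rewrite Hu. unfold lc, scal. apply vec_ext; cbn [fst snd]; ring. }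
  pose proof (geom_seq v l Hv (Z.to_nat p)) as G.
  rewrite Z2Nat.id in G by lia.
  assert (Vp : v p = v 0%Z).
  { unfold v. replace (p+1)%Z with (1+p)%Z by ring. rewrite Hper.
    rewrite <- (Hper 0%Z). replace (0+p)%Z with p by ring. reflexivity. }
  rewrite Vp in G.
  destruct (Req_dec (l ^ Z.to_nat p) 1) as [E|E]; auto.
  exfalso. apply HE.
  assert (G1 := f_equal fst G). assert (G2 := f_equal snd G).
  unfold v, scal, lc in G1, G2. cbn [fst snd] in G1, G2.
  replace (0+1)%Z with 1%Z in * by ring.
  assert (Z1 : 1 * fst (u 1%Z) + - mu * fst (u 0%Z) = 0).
  { apply (cancel_l (l ^ Z.to_nat p - 1)). intro. apply E. lra. lra. }
  assert (Z2 : 1 * snd (u 1%Z) + - mu * snd (u 0%Z) = 0).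
  { apply (cancel_l (l ^ Z.to_nat p - 1)). intro. apply E. lra. lra. }
  unfold det2.
  replace (fst (u 1%Z)) with (mu * fst (u 0%Z)) by lra.
  replace (snd (u 1%Z)) with (mu * snd (u 0%Z)) by lra. ring.
Qed.

Lemma no_split a b u p : Rec a b u -> det2 (u 0%Z) (u 1%Z) <> 0 ->
  (0 < p)%Z -> (forall k, u (k+p)%Z = u k) -> 1 - b + a <> 0 ->
  b * b - 4 * a > 0 -> False.
Proof.
  intros Hu HE Hp Hper Hz HD.
  set (s := sqrt (b*b - 4*a)).
  assert (Hs : s * s = b*b - 4*a) by (apply sqrt_sqrt; lra).
  assert (Hs0 : 0 < s) by (apply sqrt_lt_R0; lra).
  set (l := (b + s)/2). set (mu := (b - s)/2).
  assert (H1 : l + mu = b) by (unfold l, mu; field).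
  assert (H2 : l * mu = a) by (unfold l, mu; nra).
  assert (H3 : mu + l = b) by lra. assert (H4 : mu * l = a) by lra.
  pose proof (eig_pow a b u p l mu Hu HE Hp Hper H1 H2) as P1.
  pose proof (eig_pow a b u p mu l Hu HE Hp Hper H3 H4) as P2.
  assert (Hn : (0 < Z.to_nat p)%nat) by lia.
  destruct (pow_pm1 l _ Hn P1) as [L|L]; destruct (pow_pm1 mu _ Hn P2) as [M|M].
  - apply Hz. rewrite <- H1, <- H2, L, M. ring.
  - apply Hz. rewrite <- H1, <- H2, L, M. ring.
  - apply Hz. rewrite <- H1, <- H2, L, M. ring.
  - unfold l, mu in L, M. lra.
Qed.

Lemma even_case a b u p m : a <> 0 -> Rec a b u -> det2 (u 0%Z) (u 1%Z) <> 0 ->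
  (0 < p)%Z -> (forall k, u (k+p)%Z = u k) -> 1 - b + a <> 0 -> p = (2*m)%Z ->
  (forall k, u (k+m)%Z = scal (-1) (u k)) \/ (forall k, u (k+m)%Z = u k).
Proof.
  intros Ha Hu HE Hp Hper Hz Hm.
  destruct (coef a b u m Ha Hu HE) as [P [Q C]].
  pose proof (C m) as C1. pose proof (C 0%Z) as C0. pose proof (C 1%Z) as C2.
  pose proof (Hu 0%Z) as U2.
  replace (0+m)%Z with m in C0 by ring. replace (0+1)%Z with 1%Z in C0, U2 by ring.
  replace (0+2)%Z with 2%Z in U2 by ring. replace (1+1)%Z with 2%Z in C2 by ring.
  replace (1+m)%Z with (m+1)%Z in C2 by ring.
  assert (Um : u (m+m)%Z = u 0%Z).
  { replace (m+m)%Z with (0+p)%Z by lia. apply Hper. }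
  rewrite Um, C0, C2, U2 in C1.
  assert (A1 := f_equal fst C1). assert (A2 := f_equal snd C1).
  unfold lc in A1, A2. cbn [fst snd] in A1, A2.
  destruct (indep (u 0%Z) (u 1%Z) (P*P - a*Q*Q - 1) (2*P*Q + b*Q*Q) HE) as [I1 I2].
  { lra. } { lra. }
  destruct (Req_dec Q 0) as [HQ|HQ].
  - subst Q. assert (HP : (P - 1) * (P + 1) = 0) by lra.
    apply Rmult_integral in HP. destruct HP as [HP|HP].
    + right. intro k. rewrite C. apply vec_ext; unfold lc; cbn [fst snd];
      replace P with 1 by lra; ring.
    + left. intro k. rewrite C. apply vec_ext; unfold lc, scal; cbn [fst snd];
      replace P with (-1) by lra; ring.
  - exfalso. apply (no_split a b u p Hu HE Hp Hper Hz).
    assert (H2 : 2 * P + b * Q = 0).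
    { apply (cancel_l Q); auto. lra. }
    assert (H3 : (b*b - 4*a) * (Q*Q) = 4).
    { replace (b*b*(Q*Q)) with (4 * (P*P)) by nra. nra. }
    assert (H4 : 0 < Q * Q) by (apply Rsqr_pos_lt; auto).
    nra.
Qed.

Lemma A_scal u0 u1 u2 E c x : E <> 0 ->
  Amap u0 u1 u2 E (scal c x) = scal c (Amap u0 u1 u2 E x).
Proof.
  intros HE. destruct u0, u1, u2, x. unfold Amap, scal, lc, det2; simpl.
  apply vec_ext; simpl; field; auto.
Qed.

Lemma par (x y : vec) : det2 x y = 0 -> ~ (fst x = 0 /\ snd x = 0) ->
  exists l, y = scal l x.
Proof.
  destruct x as [x1 x2], y as [y1 y2]; unfold det2, scal; simpl. intros H N.
  destruct (Req_dec x1 0) as [H1|H1].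
  - assert (x2 <> 0) by tauto. exists (y2 / x2). apply vec_ext; simpl.
    + subst x1. apply (cancel_l x2); auto. field_simplify; auto. nra.
    + field; auto.
  - exists (y1 / x1). apply vec_ext; simpl.
    + field; auto.
    + apply (cancel_l x1); auto. field_simplify; auto. nra.
Qed.

Lemma per_mult (u : Z -> vec) p : (forall k, u (k+p)%Z = u k) ->
  forall m k, u (k + p*m)%Z = u k.
Proof.
  intros Hper m. induction m using Z.peano_ind; intro k.
  - f_equal; ring.
  - replace (k + p * Z.succ m)%Z with ((k + p*m) + p)%Z by ring. rewrite Hper. auto.
  - rewrite <- (Hper (k + p * Z.pred m)%Z).
    replace (k + p * Z.pred m + p)%Z with (k + p*m)%Z by (unfold Z.pred; ring). apply IHm.
Qed.

Lemma odd_case a b u p m : a <> 0 -> Rec a b u -> det2 (u 0%Z) (u 1%Z) <> 0 ->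
  (0 < p)%Z -> (forall k, u (k+p)%Z = u k) -> 1 - b + a <> 0 -> p = (2*m+1)%Z ->
  (exists w, forall k, exists j, u j = lc 2 w (-1) (u k)) -> False.
Proof.
  intros Ha Hu HE Hp Hper Hz Hm [w Hw].
  set (E := fun k => det2 (u k) (u (k+1)%Z)).
  assert (HEs : forall k, E (k+1)%Z = a * E k).
  { intro k. unfold E. replace (k+1+1)%Z with (k+2)%Z by ring. rewrite Hu.
    unfold det2, lc. cbn [fst snd]. ring. }
  assert (HEn : forall n : nat, E (Z.of_nat n) = a ^ n * E 0%Z).
  { induction n. simpl; ring. rewrite Nat2Z.inj_succ. unfold Z.succ. rewrite HEs, IHn.
    simpl; ring. }
  assert (Hpn : Z.to_nat p = (2 * Z.to_nat m + 1)%nat) by lia.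
  assert (Ha1 : a = 1).
  { pose proof (HEn (Z.to_nat p)) as H. rewrite Z2Nat.id in H by lia.
    assert (E p = E 0%Z).
    { unfold E. replace (p+1)%Z with (1+p)%Z by ring. rewrite Hper.
      rewrite <- (Hper 0%Z). replace (0+p)%Z with p by ring. reflexivity. }
    rewrite Hpn in H. apply (pow_odd1 a (Z.to_nat m)).
    apply (cancel_l (E 0%Z)). exact HE. lra. }
  subst a.
  assert (Ec : forall k, E k = E 0%Z).
  { apply Z_constR. intro k. rewrite HEs. ring. }
  set (e := det2 (u 0%Z) (u 1%Z)) in *.
  set (A := Amap (u 0%Z) (u 1%Z) (u 2%Z) e).
  pose proof (A_shift 1 b u Ha Hu HE) as HA. fold e A in HA.
  assert (Key : forall k, det2 w (u (k+1)%Z) + det2 (u k) (A w) = 2 * det2 w (A w)).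
  { intro k. destruct (Hw k) as [j Hj].
    assert (Hj1 : u (j+1)%Z = lc 2 (A w) (-1) (u (k+1)%Z)).
    { rewrite <- HA, <- HA, Hj. unfold A. apply A_lin. exact HE. }
    assert (EE : E j = E k) by (rewrite Ec, (Ec k); reflexivity).
    unfold E in EE. rewrite Hj, Hj1 in EE.
    revert EE. unfold det2, lc. cbn [fst snd]. intro. lra. }
  assert (Hdw : det2 w (A w) = 0).
  { pose proof (Key 0%Z) as K0. pose proof (Key 1%Z) as K1. pose proof (Key (-1)%Z) as K2.
    pose proof (Hu 0%Z) as R0. pose proof (Hu (-1)%Z) as R1.
    replace (0+2)%Z with 2%Z in R0 by ring. replace (0+1)%Z with 1%Z in R0, K0 by ring.
    replace (-1+2)%Z with 1%Z in R1 by ring. replace (-1+1)%Z with 0%Z in R1, K2 by ring.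
    replace (1+1)%Z with 2%Z in K1 by ring.
    rewrite R0 in K1. rewrite R1 in K0, K1.
    apply (cancel_l (2*(1 - b + 1))). intro. apply Hz. lra.
    revert K0 K1 K2. unfold det2, lc. cbn [fst snd]. intros. nra. }
  assert (Hw0 : fst w = 0 /\ snd w = 0).
  { apply Classical_Prop.NNPP. intro N.
    destruct (par w (A w) Hdw N) as [l Hl].
    set (al := det2 w (u 1%Z) / e). set (be := det2 (u 0%Z) w / e).
    set (y := fun k => lc al (u k) be (u (k+1)%Z)).
    assert (Y0 : y 0%Z = w).
    { unfold y. replace (0+1)%Z with 1%Z by ring. symmetry. apply cramer. exact HE. }
    assert (YA : forall k, y (k+1)%Z = A (y k)).
    { intro k. unfold y. unfold A. rewrite A_lin by exact HE. fold A. rewrite HA, HA.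
      reflexivity. }
    assert (Yn : forall n : nat, y (Z.of_nat n) = scal (l ^ n) w).
    { induction n. simpl. rewrite Y0. apply vec_ext; unfold scal; cbn [fst snd]; ring.
      rewrite Nat2Z.inj_succ. unfold Z.succ. rewrite YA, IHn. unfold A.
      rewrite A_scal by exact HE. fold A. rewrite Hl.
      apply vec_ext; unfold scal; cbn [fst snd]; simpl; ring. }
    assert (Yp : y p = w).
    { rewrite <- Y0. unfold y. replace (p+1)%Z with (1+p)%Z by ring. rewrite Hper.
      rewrite <- (Hper 0%Z). replace (0+p)%Z with p by ring. reflexivity. }
    pose proof (Yn (Z.to_nat p)) as H. rewrite Z2Nat.id in H by lia. rewrite Yp, Hpn in H.
    assert (Hl1 : l = 1).
    { apply (pow_odd1 l (Z.to_nat m)).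
      destruct (Req_dec (fst w) 0) as [W1|W1].
      - assert (W2 : snd w <> 0) by tauto.
        apply (f_equal snd) in H. unfold scal in H. cbn [snd] in H.
        apply (cancel_l (snd w)); auto. lra.
      - apply (f_equal fst) in H. unfold scal in H. cbn [fst] in H.
        apply (cancel_l (fst w)); auto. lra. }
    subst l.
    assert (Y1 : y 1%Z = w).
    { rewrite <- Y0. replace 1%Z with (0+1)%Z by ring. rewrite YA, Y0, Hl.
      apply vec_ext; unfold scal; cbn [fst snd]; ring. }
    assert (Y2 : y 2%Z = w).
    { replace 2%Z with (1+1)%Z by ring. rewrite YA, Y1, Hl.
      apply vec_ext; unfold scal; cbn [fst snd]; ring. }
    assert (Ry : Rec 1 b y).
    { unfold y. apply Rec_lc; auto. apply Rec_shift; auto. }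
    pose proof (Ry 0%Z) as R. replace (0+2)%Z with 2%Z in R by ring.
    replace (0+1)%Z with 1%Z in R by ring. rewrite Y0, Y1, Y2 in R.
    apply N. split.
    - apply (f_equal fst) in R. unfold lc in R. cbn [fst] in R.
      apply (cancel_l (1 - b + 1)); auto. lra.
    - apply (f_equal snd) in R. unfold lc in R. cbn [snd] in R.
      apply (cancel_l (1 - b + 1)); auto. lra. }
  destruct (Hw 0%Z) as [j Hj].
  assert (Hj' : u j = scal (-1) (u 0%Z)).
  { rewrite Hj. destruct Hw0 as [W1 W2]. unfold lc, scal. apply vec_ext; cbn [fst snd];
    rewrite ?W1, ?W2; ring. }
  assert (Sh : forall k, u (k + j)%Z = scal (-1) (u k)).
  { apply (rec_unique 1 b (fun k => u (k+j)%Z) (fun k => scal (-1) (u k))).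
    - exact Ha.
    - apply Rec_shift; exact Hu.
    - intro k. rewrite Hu. unfold lc, scal. apply vec_ext; cbn [fst snd]; ring.
    - cbv beta. replace (0+j)%Z with j by ring. exact Hj'.
    - cbv beta. replace (1+j)%Z with (j+1)%Z by ring. rewrite <- HA, Hj'.
      unfold A. rewrite A_scal by exact HE. fold A. rewrite HA. reflexivity. }
  assert (Mn : forall n : nat, u (j * Z.of_nat n)%Z = scal ((-1)^n) (u 0%Z)).
  { induction n.
    - simpl. replace (j*0)%Z with 0%Z by ring. apply vec_ext; unfold scal; cbn [fst snd]; ring.
    - rewrite Nat2Z.inj_succ. replace (j * Z.succ (Z.of_nat n))%Z with (j * Z.of_nat n + j)%Z
        by (unfold Z.succ; ring).
      rewrite Sh, IHn. apply vec_ext; unfold scal; cbn [fst snd]; simpl; ring. }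
  pose proof (Mn (Z.to_nat p)) as H. rewrite Z2Nat.id in H by lia.
  replace (j*p)%Z with (0 + p*j)%Z in H by ring. rewrite per_mult in H by exact Hper.
  rewrite Hpn, Nat.add_1_r, pow_1_odd in H.
  apply HE. unfold e.
  assert (F := f_equal fst H). assert (S := f_equal snd H).
  unfold scal in F, S. cbn [fst snd] in F, S.
  unfold det2. replace (fst (u 0%Z)) with 0 by lra. replace (snd (u 0%Z)) with 0 by lra. ring.
Qed.

Theorem corollary3p14 (r : Z -> vec) (p : Z) :
  nondegenerate r ->
  (exists a : R, forall k : Z, kappa r k = a) ->
  (exists b : R, forall k : Z, kappabar r k = b) ->
  closed_with_period r p ->
  (centrosymmetric r <-> Z.Even p).
Proof.
  intros Hnd [a Ha] [b Hb] [Hp [Hper Hmin]].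
  pose proof (L_rec_t r a b Hnd Ha Hb) as Hr.
  pose proof (L_a_nz r a Hnd Ha) as Ha0.
  pose proof (L_nz r a b p Hnd Hr Hp Hper) as Hz.
  destruct (L_u r a b Hr Hz) as [O Hu].
  set (u := fun k => vsub (r k) O) in *.
  assert (Hup : forall k, u (k+p)%Z = u k).
  { intro k. unfold u. rewrite Hper. reflexivity. }
  assert (HE : det2 (u 0%Z) (u 1%Z) <> 0).
  { intro H0. apply (Hnd 1%Z). replace (1-1)%Z with 0%Z by ring.
    pose proof (Hu 0%Z) as R0. replace (0+2)%Z with 2%Z in R0 by ring.
    replace (0+1)%Z with 1%Z in R0 by ring.
    assert (F := f_equal fst R0). assert (S := f_equal snd R0).
    unfold u, vsub, lc in F, S, H0. unfold det2 in H0. cbn [fst snd] in F, S, H0.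
    unfold tangent, vsub, det2. cbn [fst snd]. replace (1+1)%Z with 2%Z by ring.
    replace (0+1)%Z with 1%Z by ring.
    replace (fst (r 2%Z)) with (fst O + (b * (fst (r 1%Z) - fst O) + - a * (fst (r 0%Z) - fst O))) by lra.
    replace (snd (r 2%Z)) with (snd O + (b * (snd (r 1%Z) - snd O) + - a * (snd (r 0%Z) - snd O))) by lra.
    transitivity ((1 - b + a) * ((fst (r 0%Z) - fst O) * (snd (r 1%Z) - snd O) -
                                 (snd (r 0%Z) - snd O) * (fst (r 1%Z) - fst O))).
    ring. rewrite H0. ring. }
  split.
  - intro Hcs. destruct (Z.Even_or_Odd p) as [He|[m Hm]]; auto. exfalso.
    apply (odd_case a b u p m Ha0 Hu HE Hp Hup Hz Hm).
    destruct Hcs as [c Hc]. exists (vsub c O). intro k.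
    destruct (proj1 (Hc (r k)) (ex_intro _ k eq_refl)) as [j Hj].
    exists j. unfold u, vsub, lc. rewrite Hj. apply vec_ext; cbn [fst snd]; ring.
  - intros [m Hm].
    destruct (even_case a b u p m Ha0 Hu HE Hp Hup Hz Hm) as [Hneg|Hpos].
    + exists O. intro x. split.
      * intros [k Hk]. exists (k+m)%Z. pose proof (Hneg k) as H.
        assert (F := f_equal fst H). assert (S := f_equal snd H).
        unfold u, vsub, scal in F, S. cbn [fst snd] in F, S. subst x.
        apply vec_ext; cbn [fst snd]; lra.
      * intros [k Hk]. exists (k+m)%Z. pose proof (Hneg k) as H.
        assert (F := f_equal fst H). assert (S := f_equal snd H).
        unfold u, vsub, scal in F, S. cbn [fst snd] in F, S.
        assert (F2 := f_equal fst Hk). assert (S2 := f_equal snd Hk). cbn [fst snd] in F2, S2.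
        apply vec_ext; lra.
    + exfalso. destruct (Hmin m) as [k Hk]. lia. apply Hk.
      pose proof (Hpos k) as H.
      assert (F := f_equal fst H). assert (S := f_equal snd H).
      unfold u, vsub in F, S. cbn [fst snd] in F, S.
      apply vec_ext; lra.
Qed.
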